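(* Let $n\geq 3$ and let $W\subseteq\operatorname{Sym}^3\mathbb{K}^n$ be a two-dimensional linear space (pencil) of cubic forms such that for every $f\in W$ there exist linear forms $x,y$ with $f\in\operatorname{Sym}^3\langle x,y\rangle$. Then either there is a single two-dimensional space of linear forms $\langle x,y\rangle$ with $W\subseteq \operatorname{Sym}^3\langle x,y\rangle$ (all cubics in $W$ depend on the same set of $2$ variables), or $W=\langle x^2y,\,x^2z\rangle$ for some linearly independent linear forms $x,y,z$.
   Context: $\mathbb{K}$ is an algebraically closed field of characteristic zero; $\operatorname{Sym}^3\mathbb{K}^n$ is identified with the space of cubic forms in $n$ variables. *)

(* Defs.v *)
From HB Require Import structures.
From mathcomp Require Import all_boot all_order all_algebra.
From mathcomp Require Import mpoly.
Set Implicit Arguments. Unset Strict Implicit. Unset Printing Implicit Defensive.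
Import GRing.Theory.
Local Open Scope ring_scope.

(* Cubic forms in n variables over K: elements of {mpoly K[n]} that are
   3-homogeneous; linear forms: 1-homogeneous elements. *)

Definition in_sym3 (K : fieldType) (n : nat) (x y f : {mpoly K[n]}) : Prop :=
  exists c0 c1 c2 c3 : K,
    f = c0 *: (x ^+ 3) + c1 *: (x ^+ 2 * y) + c2 *: (x * y ^+ 2) + c3 *: (y ^+ 3).

Definition lin_indep2 (K : fieldType) (n : nat) (u v : {mpoly K[n]}) : Prop :=
  forall a b : K, a *: u + b *: v = 0 -> a = 0 /\ b = 0.

Definition lin_indep3 (K : fieldType) (n : nat) (u v w : {mpoly K[n]}) : Prop :=
  forall a b c : K, a *: u + b *: v + c *: w = 0 -> [/\ a = 0, b = 0 & c = 0].

Definition in_span2 (K : fieldType) (n : nat) (u v f : {mpoly K[n]}) : Prop :=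
  exists a b : K, f = a *: u + b *: v.

(* Main.v *)
Require Import Defs.
From HB Require Import structures.
From mathcomp Require Import all_boot all_order all_algebra.
From mathcomp Require Import mpoly.
From mathcomp Require Import ring zify.
From Stdlib Require Import Classical.
Import GRing.Theory.
Local Open Scope ring_scope.
Set Implicit Arguments. Unset Strict Implicit. Unset Printing Implicit Defensive.

Section Deriv.
Variable (K : fieldType) (n : nat).
Local Notation P := {mpoly K[n]}.
Implicit Types (p q : P) (w u a b : 'rV[K]_n).

Definition D w p : P := \sum_i w 0 i *: mderiv i p.
Definition lf a : P := \sum_i a 0 i *: 'X_i.
Definition dot a w : K := \sum_i a 0 i * w 0 i.

Lemma DD w p q : D w (p + q) = D w p + D w q.
Proof. by rewrite /D -big_split /=; apply: eq_bigr => i _; rewrite mderivD scalerDr. Qed.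
Lemma DZ w c p : D w (c *: p) = c *: D w p.
Proof. by rewrite /D scaler_sumr; apply: eq_bigr => i _; rewrite mderivZ !scalerA mulrC. Qed.
Lemma DN w p : D w (- p) = - D w p.
Proof. by rewrite -scaleN1r DZ scaleN1r. Qed.
Lemma DB w p q : D w (p - q) = D w p - D w q.
Proof. by rewrite DD DN. Qed.
Lemma D0 w : D w 0 = 0.
Proof. by rewrite /D big1 // => i _; rewrite mderiv0 scaler0. Qed.
Lemma Dsum w (I : Type) (r : seq I) (Q : pred I) (F : I -> P) :
  D w (\sum_(i <- r | Q i) F i) = \sum_(i <- r | Q i) D w (F i).
Proof. by elim/big_rec2: _ => [|i y1 y2 _ <-]; rewrite ?D0 ?DD. Qed.
Lemma DaddW u w p : D (u + w) p = D u p + D w p.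
Proof. by rewrite /D -big_split /=; apply: eq_bigr => i _; rewrite mxE scalerDl. Qed.
Lemma DscaleW c w p : D (c *: w) p = c *: D w p.
Proof. by rewrite /D scaler_sumr; apply: eq_bigr => i _; rewrite mxE scalerA. Qed.
Lemma DoppW w p : D (- w) p = - D w p.
Proof. by rewrite -scaleN1r DscaleW scaleN1r. Qed.
Lemma DsubW u w p : D (u - w) p = D u p - D w p.
Proof. by rewrite DaddW DoppW. Qed.
Lemma D0W p : D 0 p = 0.
Proof. by rewrite /D big1 // => i _; rewrite mxE scale0r. Qed.
Lemma DsumW (I : Type) (r : seq I) (Q : pred I) (F : I -> 'rV[K]_n) p :
  D (\sum_(i <- r | Q i) F i) p = \sum_(i <- r | Q i) D (F i) p.
Proof. by elim/big_rec2: _ => [|i y1 y2 _ <-]; rewrite ?D0W ?DaddW. Qed.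

Lemma mderiv_sumr i (I : Type) (r : seq I) (Q : pred I) (F : I -> P) :
  mderiv i (\sum_(j <- r | Q j) F j) = \sum_(j <- r | Q j) mderiv i (F j).
Proof. by elim/big_rec2: _ => [|j y1 y2 _ <-]; rewrite ?mderiv0 ?mderivD. Qed.

Lemma Dcomm u w p : D u (D w p) = D w (D u p).
Proof.
rewrite /D.
transitivity (\sum_i \sum_j (u 0 i * w 0 j) *: mderiv i (mderiv j p)).
  apply: eq_bigr => i _; rewrite mderiv_sumr scaler_sumr; apply: eq_bigr => j _.
  by rewrite mderivZ scalerA.
rewrite exchange_big /=; apply: eq_bigr => j _; rewrite mderiv_sumr scaler_sumr.
by apply: eq_bigr => i _; rewrite mderivZ scalerA mulrC mderiv_comm.
Qed.

Lemma DC w c : D w c%:MP = 0.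
Proof. by rewrite /D big1 // => i _; rewrite mderivC scaler0. Qed.

Lemma DM w p q : D w (p * q) = D w p * q + p * D w q.
Proof.
rewrite /D mulr_suml mulr_sumr -big_split /=; apply: eq_bigr => i _.
by rewrite mderivM scalerDr -scalerAl -scalerAr.
Qed.

Lemma mderivXU i j : mderiv i ('X_j : P) = (j == i)%:R%:MP.
Proof.
rewrite mderivX mnm1E; case: eqP => [->|_] /=.
  have -> : (U_(i) - U_(i) = 0)%MM by apply/mnmP => k; rewrite mnmBE subnn mnm0E.
  by rewrite mpolyX0 scale1r mpolyC1.
by rewrite scale0r mpolyC0.
Qed.

Lemma D_X w i : D w 'X_i = (w 0 i)%:MP.
Proof.
rewrite /D (bigD1 i) //= big1 => [|j ji]; last first.
  by rewrite mderivXU eq_sym (negbTE ji) mpolyC0 scaler0.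
by rewrite mderivXU eqxx mpolyC1 addr0 -mul_mpolyC mulr1.
Qed.

Lemma D_lf w a : D w (lf a) = (dot a w)%:MP.
Proof.
rewrite /lf Dsum /dot raddf_sum /=; apply: eq_bigr => i _.
by rewrite DZ D_X -mul_mpolyC mpolyCM.
Qed.

Lemma D_delta i p : D (delta_mx 0 i) p = mderiv i p.
Proof.
rewrite /D (bigD1 i) //= big1 => [|j ji]; last by rewrite mxE (negbTE ji) andbF scale0r.
by rewrite mxE !eqxx scale1r addr0.
Qed.


Lemma mderiv_homog d i p : p \is d.+1.-homog -> mderiv i p \is d.-homog.
Proof.
move=> hp; apply/dhomogP => m; rewrite mcoeff_msupp mcoeff_deriv => hm.
have : p@_(m + U_(i)) != 0 by apply: contraNneq hm => ->; rewrite mul0rn.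
rewrite -mcoeff_msupp => /(dhomog_mf hp) /=; rewrite mdegD mdeg1 addn1.
by case.
Qed.

Lemma D_homog d w p : p \is d.+1.-homog -> D w p \is d.-homog.
Proof.
move=> hp; apply: rpred_sum => i _; apply: rpredZ; exact: mderiv_homog.
Qed.

Lemma homog0_const p : p \is 0.-homog -> p = (p@_0)%:MP.
Proof.
move=> hp; apply/mpolyP => m; rewrite mcoeffC.
case: (eqVneq m 0%MM) => [->|mn0]; first by rewrite mulr1.
rewrite mulr0; apply: (dhomog_nemf_coeff hp).
by rewrite mdeg_eq0.
Qed.

Lemma C_homog c : (c%:MP : P) \is 0.-homog.
Proof.
have -> : (c%:MP : P) = c *: 1 by rewrite -mul_mpolyC mulr1.
by apply: rpredZ; exact: dhomog1.
Qed.

Lemma X_homog i : ('X_i : P) \is 1.-homog.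
Proof. by rewrite dhomogX /= mdeg1. Qed.

Lemma lf_homog a : lf a \is 1.-homog.
Proof. by apply: rpred_sum => i _; apply: rpredZ; exact: X_homog. Qed.

Lemma eulerX m : \sum_i 'X_i * mderiv i ('X_[m] : P) = (mdeg m)%:R *: 'X_[m].
Proof.
rewrite mdegE natr_sum scaler_suml; apply: eq_bigr => i _.
rewrite mderivX -scalerAr -mpolyXD.
case: (posnP (m i)) => [->|mi]; first by rewrite !scale0r.
by rewrite addmC submK //; apply/mnm_lepP => k; rewrite mnm1E; case: eqP => // <-.
Qed.

Lemma euler d p : p \is d.-homog -> \sum_i 'X_i * mderiv i p = d%:R *: p.
Proof.
move=> hp; rewrite {1 2}(mpolyE p).
under eq_bigr => i _ do rewrite mderiv_sumr mulr_sumr.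
rewrite exchange_big /= scaler_sumr big_seq [RHS]big_seq; apply: eq_bigr => m hm.
under eq_bigr => i _ do rewrite mderivZ -scalerAr.
by rewrite -scaler_sumr eulerX (dhomog_mf hp hm) scalerA mulrC -scalerA.
Qed.

Lemma homog1_lf x : x \is 1.-homog -> x = lf (\row_i x@_U_(i)).
Proof.
move=> hx; apply/mpolyP => m; rewrite /lf raddf_sum /=.
under eq_bigr => i _ do rewrite mxE mcoeffZ mcoeffX.
case: (eqVneq (mdeg m) 1%N) => [/eqP /mdeg1P [i /eqP ->]|mn1].
  rewrite (bigD1 i) //= big1 => [|j ji]; last first.
    by rewrite eq_mnm1 (negbTE ji) mulr0.
  by rewrite eqxx mulr1 addr0.
rewrite (dhomog_nemf_coeff hx mn1) big1 // => j _.
case: eqP => [jm|]; last by rewrite mulr0.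
by move: mn1; rewrite -jm mdeg1.
Qed.

End Deriv.

Section Char0.
Variable (K : fieldType) (n : nat).
Hypothesis char0 : [pchar K] =i pred0.
Local Notation P := {mpoly K[n]}.
Implicit Types (p q g : P) (w u a b : 'rV[K]_n).

Lemma nK_neq0 k : (k.+1)%:R != 0 :> K.
Proof. by move/pcharf0P: char0 => ->. Qed.

Lemma homog_zero d p : p \is d.+1.-homog -> (forall i, mderiv i p = 0) -> p = 0.
Proof.
move=> hp h0; have E := euler hp.
rewrite big1 in E; last by move=> i _; rewrite h0 mulr0.
by move/esym/eqP: E; rewrite scaler_eq0 (negbTE (nK_neq0 d)) => /eqP.
Qed.

Definition kills m (S : 'M[K]_(m, n)) p := forall w, (w <= S)%MS -> D w p = 0.

Lemma kills_adds m1 m2 (S : 'M_(m1, n)) (T : 'M_(m2, n)) p :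
  kills S p -> kills T p -> kills (S + T)%MS p.
Proof.
move=> hS hT w /sub_addsmxP [u ->]; rewrite DaddW hS ?hT ?addr0 //; exact: submxMl.
Qed.

Lemma kills_sub m1 m2 (S : 'M_(m1, n)) (T : 'M_(m2, n)) p :
  (T <= S)%MS -> kills S p -> kills T p.
Proof. by move=> sTS hS w hw; apply: hS; exact: submx_trans hw sTS. Qed.

Lemma kills_full m (S : 'M_(m, n)) d p :
  row_full S -> kills S p -> p \is d.+1.-homog -> p = 0.
Proof.
move=> fS hS hp; apply: (homog_zero hp) => i.
by rewrite -D_delta; apply: hS; exact: submx_full.
Qed.

Definition c3 g (i j k : 'I_n) : K := (mderiv k (mderiv j (mderiv i g)))@_0.
Definition Amx g : 'M[K]_n :=
  (\bigcap_(jk : 'I_n * 'I_n) kermx (\col_i c3 g i jk.1 jk.2))%MS.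

Lemma mderiv2_D w g j k :
  mderiv k (mderiv j (D w g)) = \sum_i w 0 i *: mderiv k (mderiv j (mderiv i g)).
Proof.
rewrite /D (mderiv_sumr j) (mderiv_sumr k); apply: eq_bigr => i _; by rewrite !mderivZ.
Qed.

Lemma mulmx_col w (F : 'I_n -> K) : (w *m \col_i F i) = (\sum_i w 0 i * F i)%:M.
Proof.
apply/matrixP => x y; rewrite !ord1 !mxE eqxx mulr1n; apply: eq_bigr => i _.
by rewrite mxE.
Qed.

Lemma Amx_in w g : D w g = 0 -> (w <= Amx g)%MS.
Proof.
move=> hw; apply/sub_bigcapmxP => [[j k]] _ /=; rewrite sub_kermx mulmx_col.
have := congr1 (mcoeff 0%MM) (congr1 (mderiv k) (congr1 (mderiv j) hw)).
rewrite mderiv2_D !mderiv0 mcoeff0 raddf_sum /= => E.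
apply/eqP/matrixP => x y; rewrite !ord1 !mxE eqxx mulr1n; apply: (etrans _ E).
by apply: eq_bigr => i _; rewrite mcoeffZ.
Qed.

Lemma Amx_sub w g : g \is 3.-homog -> (w <= Amx g)%MS -> D w g = 0.
Proof.
move=> hg /sub_bigcapmxP hw.
have h2 : D w g \is 2.-homog by exact: D_homog.
apply: (homog_zero h2) => j; apply: (homog_zero (mderiv_homog j h2)) => k.
rewrite mderiv2_D.
have {}hw := hw (j, k) isT; rewrite sub_kermx mulmx_col /= in hw.
have E : forall i, mderiv k (mderiv j (mderiv i g)) = (c3 g i j k)%:MP.
  move=> i; apply: homog0_const.
  by do 3! apply: mderiv_homog.
under eq_bigr => i _ do rewrite E -mul_mpolyC -mpolyCM.
rewrite -raddf_sum /=; move/eqP/matrixP: hw => /(_ 0 0); rewrite !mxE eqxx mulr1n => ->.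
exact: mpolyC0.
Qed.

End Char0.

Section Lin.
Variable (K : fieldType) (n : nat).
Local Notation P := {mpoly K[n]}.
Implicit Types (p q g x y : P) (w u a b : 'rV[K]_n).

Lemma Dexp w p k : D w p = 0 -> D w (p ^+ k) = 0.
Proof.
move=> h; elim: k => [|k ih]; first by rewrite expr0 -mpolyC1 DC.
by rewrite exprS DM h ih mul0r mulr0 addr0.
Qed.

Lemma sym3_kill x y g w : in_sym3 x y g -> D w x = 0 -> D w y = 0 -> D w g = 0.
Proof.
case=> [c0 [c1 [c2 [c3 ->]]]] hx hy.
rewrite !DD !DZ (Dexp 3 hx) (Dexp 3 hy) !DM ?hx ?hy.
by rewrite !(mul0r, mulr0, addr0, scaler0).
Qed.

Lemma dot_mx a w : dot a w = (w *m a^T) 0 0.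
Proof. by rewrite !mxE /dot; apply: eq_bigr => i _; rewrite mxE mulrC. Qed.

Definition Kab a b : 'M[K]_n := kermx (row_mx a^T b^T).

Lemma KabP a b w : (w <= Kab a b)%MS <-> (dot a w = 0 /\ dot b w = 0).
Proof.
rewrite sub_kermx mul_mx_row row_mx_eq0 !dot_mx; split.
  by case/andP => /eqP -> /eqP ->; rewrite !mxE.
case=> ha hb; apply/andP; split; apply/eqP; rewrite [LHS]mx11_scalar ?ha ?hb;
  by rewrite raddf0.
Qed.

Lemma rank_Kab a b : (n - 2 <= \rank (Kab a b))%N.
Proof. by rewrite mxrank_ker leq_sub2l // rank_leq_col. Qed.

Lemma rank_Amx_hyp g x y : x \is 1.-homog -> y \is 1.-homog -> in_sym3 x y g ->
  (n - 2 <= \rank (Amx g))%N.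
Proof.
move=> /homog1_lf hx /homog1_lf hy hg.
set a := \row_i x@_U_(i) in hx; set b := \row_i y@_U_(i) in hy.
apply: leq_trans (rank_Kab a b) _; apply: mxrankS; apply/rV_subP => w /KabP [ha hb].
apply: Amx_in; apply: (sym3_kill hg).
  by rewrite hx D_lf ha mpolyC0.
by rewrite hy D_lf hb mpolyC0.
Qed.


Lemma perp_basis (H : 'M[K]_n) k : (k <= n)%N -> (n - k <= \rank H)%N ->
  exists L : 'M[K]_(k, n), row_free L /\ forall w : 'rV_n, w *m L^T = 0 -> (w <= H)%MS.
Proof.
move=> kn rH.
set S := (cokermx H)^T.
have rS : (\rank S <= k)%N by rewrite mxrank_tr mxrank_coker leq_subCl.
set U := row_ebase S.
exists (pid_mx k *m U); split.
  by rewrite /row_free mxrankMfree ?row_free_unit ?row_ebase_unit // rank_pid_mx.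
move=> w hw; rewrite submxE.
have eS : S = (col_ebase S *m (pid_mx (\rank S) : 'M_(n, k))) *m (pid_mx k *m U).
  rewrite mulmxA -(mulmxA _ (pid_mx _)) mul_pid_mx.
  by rewrite (minn_idPl rS) (minn_idPr rS) mulmx_ebase.
have : w *m S^T = 0 by rewrite {1}eS trmx_mul mulmxA hw mul0mx.
by rewrite trmxK => ->.
Qed.

End Lin.

Section Suff.
Variable (K : fieldType) (n : nat).
Hypothesis char0 : [pchar K] =i pred0.
Local Notation P := {mpoly K[n]}.
Implicit Types (p q g x y : P) (w u v a b : 'rV[K]_n).

Lemma dotDr a w1 w2 : dot a (w1 + w2) = dot a w1 + dot a w2.
Proof. by rewrite /dot -big_split; apply: eq_bigr => i _; rewrite mxE mulrDr. Qed.
Lemma dotZr a c w : dot a (c *: w) = c * dot a w.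
Proof. by rewrite /dot mulr_sumr; apply: eq_bigr => i _; rewrite mxE mulrCA. Qed.
Lemma dotNr a w : dot a (- w) = - dot a w.
Proof. by rewrite -scaleN1r dotZr mulN1r. Qed.
Lemma dotBr a w1 w2 : dot a (w1 - w2) = dot a w1 - dot a w2.
Proof. by rewrite dotDr dotNr. Qed.
Lemma dot_delta a i : dot a (delta_mx 0 i) = a 0 i.
Proof.
rewrite /dot (bigD1 i) //= big1 => [|j ji]; last by rewrite mxE (negbTE ji) andbF mulr0.
by rewrite mxE !eqxx mulr1 addr0.
Qed.

Definition killed2 a b p := forall w, dot a w = 0 -> dot b w = 0 -> D w p = 0.

Lemma killed2_D a b p z : killed2 a b p -> killed2 a b (D z p).
Proof. by move=> h w ha hb; rewrite Dcomm h // D0. Qed.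

Lemma inv_scale k p q : (k.+1%:R : K) *: p = q -> p = (k.+1%:R)^-1 *: q.
Proof. by move=> <-; rewrite scalerA mulVf ?scale1r // (nK_neq0 char0). Qed.

Lemma suff_sym3 a b g : g \is 3.-homog -> row_free (col_mx a b) -> killed2 a b g ->
  in_sym3 (lf a) (lf b) g.
Proof.
move=> hg hab hk.
have [B hB] := row_freeP hab; rewrite mul_col_mx in hB.
have hA : a *m B = usubmx (1%:M : 'M[K]_(1+1)) by rewrite -hB col_mxKu.
have hBb : b *m B = dsubmx (1%:M : 'M[K]_(1+1)) by rewrite -hB col_mxKd.
set i0 := lshift 1 (0 : 'I_1); set i1 := rshift 1 (0 : 'I_1).
have dotE c j : dot c (\row_k B k j) = (c *m B) 0 j.
  by rewrite /dot !mxE; apply: eq_bigr => k _; rewrite mxE.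
set u := \row_k B k i0; set v := \row_k B k i1.
have au : dot a u = 1 by rewrite dotE hA !mxE eqxx.
have av : dot a v = 0 by rewrite dotE hA !mxE.
have bu : dot b u = 0 by rewrite dotE hBb !mxE.
have bv : dot b v = 1 by rewrite dotE hBb !mxE eqxx.
have dec p i : killed2 a b p -> mderiv i p = a 0 i *: D u p + b 0 i *: D v p.
  move=> hp; rewrite -D_delta.
  have eh : D (delta_mx 0 i - (a 0 i *: u + b 0 i *: v)) p = 0.
    apply: hp; rewrite dotBr dotDr !dotZr dot_delta.
      by rewrite au av mulr1 mulr0 addr0 subrr.
    by rewrite bu bv mulr1 mulr0 add0r subrr.
  by rewrite -[delta_mx 0 i](subrK (a 0 i *: u + b 0 i *: v)) DaddW eh add0r DaddW !DscaleW.
have eul d p : p \is d.-homog -> killed2 a b p ->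
    d%:R *: p = lf a * D u p + lf b * D v p.
  move=> hp hkp; rewrite -(euler hp) /lf !mulr_suml -big_split /=.
  apply: eq_bigr => i _; rewrite (dec _ _ hkp) mulrDr -!scalerAl -!scalerAr.
  by [].
set x := lf a; set y := lf b.
have lin p : p \is 1.-homog -> killed2 a b p ->
    p = x * ((D u p)@_0)%:MP + y * ((D v p)@_0)%:MP.
  move=> hp hkp; have E := eul _ _ hp hkp; rewrite scale1r in E; rewrite {1}E.
  by rewrite -(homog0_const (D_homog u hp)) -(homog0_const (D_homog v hp)).
set Qu := D u g; set Qv := D v g.
have hQu : Qu \is 2.-homog by exact: D_homog.
have hQv : Qv \is 2.-homog by exact: D_homog.
have kQu : killed2 a b Qu by exact: killed2_D.
have kQv : killed2 a b Qv by exact: killed2_D.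
have e3 := inv_scale (eul _ _ hg hk).
have e2u := inv_scale (eul _ _ hQu kQu).
have e2v := inv_scale (eul _ _ hQv kQv).
have lin' p : p \is 1.-homog -> killed2 a b p ->
    exists al be : K, p = x * al%:MP + y * be%:MP.
  by move=> hp hkp; exists (D u p)@_0, (D v p)@_0; exact: lin.
have [A1 [B1 l1]] := lin' _ (D_homog u hQu) (killed2_D u kQu).
have [A2 [B2 l2]] := lin' _ (D_homog v hQu) (killed2_D v kQu).
have [A3 [B3 l3]] := lin' _ (D_homog u hQv) (killed2_D u kQv).
have [A4 [B4 l4]] := lin' _ (D_homog v hQv) (killed2_D v kQv).
set k3 := (3%:R : K)^-1; set k2 := (2%:R : K)^-1.
exists (k3 * k2 * A1), (k3 * k2 * (B1 + A2 + A3)), (k3 * k2 * (B2 + B3 + A4)),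
  (k3 * k2 * B4).
time "r1" rewrite e3 -/Qu -/Qv e2u e2v.
time "r2" rewrite l1 l2 l3 l4.
time "r3" rewrite -!mul_mpolyC !mpolyCM !mpolyCD.
rewrite -/x -/y /k3 /k2. ring.
Qed.

End Suff.

Section Factor.
Variable (K : fieldType) (n : nat).
Hypothesis char0 : [pchar K] =i pred0.
Local Notation P := {mpoly K[n]}.
Implicit Types (p q g x y : P) (w u v a b : 'rV[K]_n).

Lemma euler_lin d p a b R S : p \is d.-homog ->
  (forall i, mderiv i p = a 0 i *: R + b 0 i *: S) ->
  d%:R *: p = lf a * R + lf b * S.
Proof.
move=> hp h; rewrite -(euler hp) /lf !mulr_suml -big_split /=.
by apply: eq_bigr => i _; rewrite h mulrDr -!scalerAl -!scalerAr.
Qed.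

Variables (l r : 'rV[K]_n).
Hypothesis lr : dot l r = 1.

Definition killed1 p := forall h, dot l h = 0 -> D h p = 0.

Lemma killed1_D p z : killed1 p -> killed1 (D z p).
Proof. by move=> hp h hh; rewrite Dcomm hp // D0. Qed.

Lemma dot_h i : dot l (delta_mx 0 i - l 0 i *: r) = 0.
Proof. by rewrite dotBr dotZr dot_delta lr mulr1 subrr. Qed.

Lemma dec1 p i : mderiv i p = l 0 i *: D r p + D (delta_mx 0 i - l 0 i *: r) p.
Proof. by rewrite -D_delta -{1}[delta_mx 0 i](subrK (l 0 i *: r)) DaddW DscaleW addrC. Qed.

Lemma pow_form d p : p \is d.-homog -> killed1 p -> exists c : K, p = c *: lf l ^+ d.
Proof.
elim: d p => [|d ih] p hp hk.
  by exists p@_0; rewrite expr0 {1}(homog0_const hp) -mul_mpolyC mulr1.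
have [c hc] := ih _ (D_homog r hp) (killed1_D r hk).
have E : d.+1%:R *: p = lf l * D r p + lf 0 * 0.
  apply: euler_lin => // i; rewrite dec1 (hk _ (dot_h i)).
  by rewrite mxE scale0r !addr0.
rewrite mulr0 addr0 hc -scalerAr -exprS in E.
by exists ((d.+1%:R)^-1 * c); rewrite (inv_scale char0 E) scalerA.
Qed.

Lemma coplanar_factor g : g \is 3.-homog ->
  (forall u w, dot l u = 0 -> dot l w = 0 -> D u (D w g) = 0) ->
  exists y, y \is 1.-homog /\ g = lf l ^+ 2 * y.
Proof.
move=> hg hk.
set h := fun i : 'I_n => delta_mx 0 i - l 0 i *: r.
have hs i : exists c : K, D (h i) g = c *: lf l ^+ 2.
  apply: pow_form; first exact: D_homog.
  by move=> u hu; apply: hk => //; exact: dot_h.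
have [c hc] := fin_all_exists hs.
set Q := D r g.
have hQ : Q \is 2.-homog by exact: D_homog.
have ht i : exists c : K, D (h i) Q = c *: lf l ^+ 1.
  apply: pow_form; first exact: D_homog.
  move=> u hu; rewrite /Q (Dcomm (h i) r) (Dcomm u r) (hk _ _ hu (dot_h i)).
  by rewrite D0.
have [c' hc'] := fin_all_exists ht.
have E3 : 3%:R *: g = lf l * Q + lf (\row_i c i) * lf l ^+ 2.
  apply: euler_lin => // i; by rewrite dec1 -/(h i) hc mxE.
have E2 : 2%:R *: Q = lf l * D r Q + lf (\row_i c' i) * lf l.
  apply: euler_lin => // i; by rewrite dec1 -/(h i) hc' mxE expr1.
exists ((3%:R : K)^-1 *: ((2%:R : K)^-1 *: (D r Q + lf (\row_i c' i)) + lf (\row_i c i))).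
split.
  apply: rpredZ; apply: rpredD; first apply: rpredZ; first apply: rpredD.
  - exact: D_homog.
  - exact: lf_homog.
  - exact: lf_homog.
rewrite (inv_scale char0 E3) {1}(inv_scale char0 E2).
rewrite -!mul_mpolyC.
ring.
Qed.

End Factor.

Section Misc.
Variable (K : fieldType) (n : nat).
Local Notation P := {mpoly K[n]}.
Implicit Types (p q g h x y : P) (w u v a b : 'rV[K]_n).

Lemma in_sym3_lin x y f g (a b : K) : in_sym3 x y f -> in_sym3 x y g ->
  in_sym3 x y (a *: f + b *: g).
Proof.
case=> [c0 [c1 [c2 [c3 ->]]]] [d0 [d1 [d2 [d3 ->]]]].
exists (a * c0 + b * d0), (a * c1 + b * d1), (a * c2 + b * d2), (a * c3 + b * d3).
rewrite -!mul_mpolyC !mpolyCD !mpolyCM; ring.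
Qed.

Lemma lf_coef a i : (lf a)@_U_(i) = a 0 i.
Proof.
rewrite /lf raddf_sum /= (bigD1 i) //= big1 => [|j ji].
  by rewrite mcoeffZ mcoeffXU eqxx mulr1 addr0.
by rewrite mcoeffZ mcoeffXU (negbTE ji) mulr0.
Qed.

Lemma lfD a b : lf (a + b) = lf a + lf b.
Proof. by rewrite /lf -big_split; apply: eq_bigr => i _; rewrite mxE scalerDl. Qed.
Lemma lfZ c a : lf (c *: a) = c *: lf a.
Proof. by rewrite /lf scaler_sumr; apply: eq_bigr => i _; rewrite mxE scalerA. Qed.

Lemma lf_inj a b : lf a = lf b -> a = b.
Proof.
move=> e; apply/matrixP => i j; rewrite !ord1 -!lf_coef; by rewrite e.
Qed.

Lemma lf_eq0 a : lf a = 0 -> a = 0.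
Proof.
move=> e; apply: lf_inj; rewrite e /lf big1 // => i _.
by rewrite mxE scale0r.
Qed.

End Misc.

Section Kf.
Variable (K : fieldType) (n : nat).
Hypothesis char0 : [pchar K] =i pred0.
Local Notation P := {mpoly K[n]}.
Implicit Types (p q g h x y : P) (w u v a b : 'rV[K]_n).

Lemma memA g w : g \is 3.-homog -> (w <= Amx g)%MS <-> D w g = 0.
Proof. by move=> hg; split; [exact: Amx_sub | exact: Amx_in]. Qed.

Lemma Kfull g h w c : g \is 3.-homog -> h \is 3.-homog ->
  row_full (Amx g + Amx h)%MS -> D w g = c *: D w h -> D w g = 0.
Proof.
move=> hg hh hf e.
apply: (kills_full char0 hf _ (D_homog w hg)); apply: kills_adds => u hu.
  by rewrite Dcomm (proj1 (memA u hg) hu) D0.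
by rewrite e DZ Dcomm (proj1 (memA u hh) hu) D0 scaler0.
Qed.

End Kf.

Section Main.
Variable (K : fieldType) (n : nat).
Hypothesis char0 : [pchar K] =i pred0.
Local Notation P := {mpoly K[n]}.
Implicit Types (p q g h x y : P) (w u v a b : 'rV[K]_n).
Variables (f1 f2 : P).
Hypotheses (hn : (3 <= n)%N) (h1 : f1 \is 3.-homog) (h2 : f2 \is 3.-homog)
  (hind : lin_indep2 f1 f2)
  (hyp : forall f, in_span2 f1 f2 f ->
     exists x y : P, [/\ x \is 1.-homog, y \is 1.-homog & in_sym3 x y f]).

Definition Disj1 := exists x y : P,
     [/\ x \is 1.-homog, y \is 1.-homog, lin_indep2 x y &
         forall f, in_span2 f1 f2 f -> in_sym3 x y f].

Lemma dot0_mx a w : dot a w = 0 -> w *m a^T = 0.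
Proof. by move=> h; rewrite [LHS]mx11_scalar -dot_mx h raddf0. Qed.

Lemma case1 : (n - 2 <= \rank (Amx f1 :&: Amx f2)%MS)%N -> Disj1.
Proof.
move=> hr.
have [L [fL hL]] := @perp_basis K n (Amx f1 :&: Amx f2)%MS (1 + 1) (ltnW hn) hr.
pose a := usubmx L; pose b := dsubmx L.
have eL : col_mx a b = L by rewrite vsubmxK.
have kil g : (forall w, (w <= Amx f1 :&: Amx f2)%MS -> D w g = 0) -> killed2 a b g.
  move=> hg w ha hb; apply: hg; apply: hL.
  by rewrite -eL tr_col_mx mul_mx_row (dot0_mx ha) (dot0_mx hb) row_mx0.
have fab : row_free (col_mx a b) by rewrite eL.
have s1 : in_sym3 (lf a) (lf b) f1.
  apply: (suff_sym3 char0 h1 fab); apply: kil => w; rewrite sub_capmx => /andP [hw _].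
  exact: Amx_sub char0 _ _ h1 hw.
have s2 : in_sym3 (lf a) (lf b) f2.
  apply: (suff_sym3 char0 h2 fab); apply: kil => w; rewrite sub_capmx => /andP [_ hw].
  exact: Amx_sub char0 _ _ h2 hw.
exists (lf a), (lf b); split; try exact: lf_homog.
  move=> al be e.
  have e0 : row_mx (al%:M : 'M_1) (be%:M : 'M_1) *m col_mx a b = 0 *m col_mx a b.
    rewrite mul_row_col !mul_scalar_mx mul0mx; apply: lf_eq0.
    by rewrite lfD !lfZ.
  have /eqP := row_free_inj fab e0; rewrite row_mx_eq0 => /andP [/eqP ea /eqP eb].
  split.
    by have := congr1 (fun M : 'M[K]_1 => M 0 0) ea; rewrite !mxE eqxx mulr1n.
  by have := congr1 (fun M : 'M[K]_1 => M 0 0) eb; rewrite !mxE eqxx mulr1n.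
by move=> f [al [be ->]]; exact: in_sym3_lin.
Qed.


Local Notation A1 := (Amx f1).
Local Notation A2 := (Amx f2).
Local Notation A3 := (Amx (f1 + f2)).
Local Notation A4 := (Amx (f1 - f2)).

Lemma h3 : (f1 + f2) \is 3.-homog. Proof. exact: rpredD. Qed.
Lemma h4 : (f1 - f2) \is 3.-homog. Proof. exact: rpredB. Qed.

Lemma rank_span g : in_span2 f1 f2 g -> (n - 2 <= \rank (Amx g))%N.
Proof. by move/hyp => [x [y [hx hy hs]]]; exact: rank_Amx_hyp hx hy hs. Qed.

Lemma r1 : (n - 2 <= \rank A1)%N.
Proof. by apply: rank_span; exists 1, 0; rewrite scale1r scale0r addr0. Qed.
Lemma r2 : (n - 2 <= \rank A2)%N.
Proof. by apply: rank_span; exists 0, 1; rewrite scale1r scale0r add0r. Qed.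
Lemma r3 : (n - 2 <= \rank A3)%N.
Proof. by apply: rank_span; exists 1, 1; rewrite !scale1r. Qed.
Lemma r4 : (n - 2 <= \rank A4)%N.
Proof. by apply: rank_span; exists 1, (-1); rewrite scale1r scaleN1r. Qed.

Lemma m1 w : (w <= A1)%MS <-> D w f1 = 0. Proof. exact (memA char0 w h1). Qed.
Lemma m2 w : (w <= A2)%MS <-> D w f2 = 0. Proof. exact (memA char0 w h2). Qed.
Lemma m3 w : (w <= A3)%MS <-> D w (f1 + f2) = 0. Proof. exact (memA char0 w h3). Qed.
Lemma m4 w : (w <= A4)%MS <-> D w (f1 - f2) = 0. Proof. exact (memA char0 w h4). Qed.

Lemma mE w : (w <= A1 :&: A2)%MS <-> D w f1 = 0 /\ D w f2 = 0.
Proof.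
rewrite sub_capmx; split; first by case/andP => /m1 -> /m2 ->.
by case=> /m1 -> /m2 ->.
Qed.

Lemma rank_full_le m (S : 'M[K]_(m, n)) : ~~ row_full S -> (\rank S <= n - 1)%N.
Proof.
rewrite /row_full => hS; have := rank_leq_col S; move: hS; lia.
Qed.


Definition Disj2 := exists x y z : P,
     [/\ x \is 1.-homog, y \is 1.-homog, z \is 1.-homog, lin_indep3 x y z &
         forall f, in_span2 f1 f2 f <-> in_span2 (x ^+ 2 * y) (x ^+ 2 * z) f].

Section Case2.
Hypothesis hE : (\rank (A1 :&: A2) <= n - 3)%N.

Lemma nf12 : ~~ row_full (A1 + A2)%MS.
Proof.
apply/negP => hf.
have sub : (A3 <= A1 :&: A2)%MS.
  apply/rV_subP => w /m3 hw; apply/mE.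
  have e : D w f1 = (-1) *: D w f2.
    by rewrite scaleN1r; apply/eqP; rewrite -addr_eq0 -DD hw.
  have z := Kfull char0 h1 h2 hf e; split => //.
  by move: hw; rewrite DD z add0r.
have := mxrankS sub; have := r3; move: hE hn; lia.
Qed.

Lemma nf32 : ~~ row_full (A3 + A2)%MS.
Proof.
apply/negP => hf.
have sub : (A1 <= A1 :&: A2)%MS.
  apply/rV_subP => w /m1 hw; apply/mE.
  have e : D w (f1 + f2) = 1 *: D w f2 by rewrite scale1r DD hw add0r.
  have z := Kfull char0 h3 h2 hf e; split => //.
  by move: z; rewrite DD hw add0r.
have := mxrankS sub; have := r1; move: hE hn; lia.
Qed.

Lemma nf31 : ~~ row_full (A3 + A1)%MS.
Proof.
apply/negP => hf.
have sub : (A2 <= A1 :&: A2)%MS.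
  apply/rV_subP => w /m2 hw; apply/mE.
  have e : D w (f1 + f2) = 1 *: D w f1 by rewrite scale1r DD hw addr0.
  have z := Kfull char0 h3 h1 hf e; split => //.
  by move: z; rewrite DD hw addr0.
have := mxrankS sub; have := r2; move: hE hn; lia.
Qed.

Lemma cap32 : (A3 :&: A2 <= A1 :&: A2)%MS.
Proof.
apply/rV_subP => w; rewrite sub_capmx => /andP [/m3 h3w /m2 h2w]; apply/mE.
by split => //; move: h3w; rewrite DD h2w addr0.
Qed.

Lemma cap31 : (A3 :&: A1 <= A1 :&: A2)%MS.
Proof.
apply/rV_subP => w; rewrite sub_capmx => /andP [/m3 h3w /m1 h1w]; apply/mE.
by split => //; move: h3w; rewrite DD h1w add0r.
Qed.

Lemma rk12 : \rank (A1 + A2)%MS = (n - 1)%N.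
Proof.
have := mxrank_sum_cap A1 A2; have := rank_full_le nf12; have := r1; have := r2.
move: hE hn; lia.
Qed.

Lemma rk32 : \rank (A3 + A2)%MS = (n - 1)%N.
Proof.
have := mxrank_sum_cap A3 A2; have := rank_full_le nf32; have := r3; have := r2.
have := mxrankS cap32; move: hE hn; lia.
Qed.

Lemma rk31 : \rank (A3 + A1)%MS = (n - 1)%N.
Proof.
have := mxrank_sum_cap A3 A1; have := rank_full_le nf31; have := r3; have := r1.
have := mxrankS cap31; move: hE hn; lia.
Qed.


Section Coplanar.
Hypothesis cop : (A3 <= A1 + A2)%MS.

Lemma H13 : (A1 + A2 <= A3 + A1)%MS.
Proof.
have s : (A3 + A1 <= A1 + A2)%MS by rewrite addsmx_sub cop addsmxSl.
by rewrite -(mxrank_leqif_sup s).2 rk31 rk12.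
Qed.

Lemma H23 : (A1 + A2 <= A3 + A2)%MS.
Proof.
have s : (A3 + A2 <= A1 + A2)%MS by rewrite addsmx_sub cop addsmxSr.
by rewrite -(mxrank_leqif_sup s).2 rk32 rk12.
Qed.

Lemma kH1 w : (w <= A1 + A2)%MS -> kills (A1 + A2)%MS (D w f1).
Proof.
case/sub_addsmxP => [[x1 x2] /= ->].
have w1 : (x1 *m A1 <= A1)%MS by exact: submxMl.
have w2 : (x2 *m A2 <= A2)%MS by exact: submxMl.
rewrite DaddW (proj1 (m1 _) w1) add0r.
have e : D (x2 *m A2) f1 = D (x2 *m A2) (f1 + f2) by rewrite DD (proj1 (m2 _) w2) addr0.
apply: (kills_sub H13); apply: kills_adds => u hu.
  by rewrite e Dcomm (proj1 (m3 _) hu) D0.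
by rewrite Dcomm (proj1 (m1 _) hu) D0.
Qed.

Lemma kH2 w : (w <= A1 + A2)%MS -> kills (A1 + A2)%MS (D w f2).
Proof.
case/sub_addsmxP => [[x1 x2] /= ->].
have w1 : (x1 *m A1 <= A1)%MS by exact: submxMl.
have w2 : (x2 *m A2 <= A2)%MS by exact: submxMl.
rewrite DaddW (proj1 (m2 _) w2) addr0.
have e : D (x1 *m A1) f2 = D (x1 *m A1) (f1 + f2) by rewrite DD (proj1 (m1 _) w1) add0r.
apply: (kills_sub H23); apply: kills_adds => u hu.
  by rewrite e Dcomm (proj1 (m3 _) hu) D0.
by rewrite Dcomm (proj1 (m2 _) hu) D0.
Qed.


Lemma coplanar_case : Disj1 \/ Disj2.
Proof.
have rH : (n - 1 <= \rank (A1 + A2)%MS)%N by rewrite rk12.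
have [L [fL hL]] := @perp_basis K n (A1 + A2)%MS 1 (ltnW (ltnW hn)) rH.
have [i hi] : exists i, L 0 i != 0.
  case: (pickP (fun i => L 0 i != 0)) => [i hi|h0]; first by exists i.
  move: fL; rewrite /row_free.
  have -> : L = 0.
    apply/matrixP => x y; rewrite ord1 mxE; by apply/eqP/negbFE; exact: h0.
  by rewrite mxrank0.
pose r : 'rV[K]_n := (L 0 i)^-1 *: delta_mx 0 i.
have lr : dot L r = 1 by rewrite dotZr dot_delta mulVf.
have inH u : dot L u = 0 -> (u <= A1 + A2)%MS by move=> hu; apply: hL; exact: dot0_mx.
have [y1 [hy1 e1]] := coplanar_factor char0 lr h1
  (fun u w hu hw => kH1 (inH w hw) (inH u hu)).
have [y2 [hy2 e2]] := coplanar_factor char0 lr h2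
  (fun u w hu hw => kH2 (inH w hw) (inH u hu)).
move: e1 e2; set ell := lf L => e1 e2.
case: (classic (lin_indep3 ell y1 y2)) => [hi3|hni].
  right; exists ell, y1, y2; split => //; first exact: lf_homog.
  by move=> f; rewrite -e1 -e2.
have [a [b [c [hab hnot]]]] : exists a b c : K,
    a *: ell + b *: y1 + c *: y2 = 0 /\ ~ [/\ a = 0, b = 0 & c = 0].
  apply: NNPP => hne; apply: hni => a b c habc; apply: NNPP => hn'; apply: hne.
  by exists a, b, c.
have yind : lin_indep2 y1 y2.
  move=> be ga e; apply: hind.
  by rewrite e1 e2 !scalerAr -mulrDr e mulr0.
case: (eqVneq a 0) => [a0|ha].
  exfalso; apply: hnot; rewrite a0 scale0r add0r in hab.
  by have [-> ->] := yind _ _ hab.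
left; exists y1, y2; split => //.
have e : a *: ell = - (b *: y1 + c *: y2).
  by apply/eqP; rewrite -addr_eq0 addrA hab.
have eell : ell = (- (a^-1 * b)) *: y1 + (- (a^-1 * c)) *: y2.
  rewrite -[ell]scale1r -(mulVf ha) -scalerA e scalerN scalerDr !scalerA opprD.
  by rewrite -!scaleNr.
move: eell; set p := - (a^-1 * b); set q := - (a^-1 * c) => eell.
have s1 : in_sym3 y1 y2 f1.
  exists (p * p), (p * q + p * q), (q * q), 0.
  rewrite e1 eell -!mul_mpolyC !mpolyCD !mpolyCM mpolyC0; ring.
have s2 : in_sym3 y1 y2 f2.
  exists 0, (p * p), (p * q + p * q), (q * q).
  rewrite e2 eell -!mul_mpolyC !mpolyCD !mpolyCM mpolyC0; ring.
by move=> f [al [be ->]]; exact: in_sym3_lin.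
Qed.

End Coplanar.


Section NonCoplanar.
Hypothesis ncop : ~~ (A3 <= A1 + A2)%MS.

Lemma fullH3 : row_full (A1 + A2 + A3)%MS.
Proof.
have s := addsmxSl (A1 + A2)%MS A3.
have hne : ~~ (A1 + A2 + A3 <= A1 + A2)%MS.
  by apply: contra ncop => h; exact: submx_trans (addsmxSr _ _) h.
have lt : (\rank (A1 + A2) < \rank (A1 + A2 + A3))%N.
  by rewrite ltn_neqAle mxrankS // andbT (mxrank_leqif_sup s).2.
rewrite /row_full; have := rank_leq_col (A1 + A2 + A3)%MS; move: lt; rewrite rk12.
move: hn; lia.
Qed.

Lemma mix12 u w : (u <= A1)%MS -> (w <= A2)%MS ->
  D u (D w f1) = 0 /\ D u (D w f2) = 0.
Proof.
move=> /m1 hu /m2 hw; split; first by rewrite Dcomm hu D0.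
by rewrite hw D0.
Qed.

Lemma mix13 u w : (u <= A1)%MS -> (w <= A3)%MS ->
  D u (D w f1) = 0 /\ D u (D w f2) = 0.
Proof.
move=> /m1 hu /m3 hw; split; first by rewrite Dcomm hu D0.
have e : D w f2 = - D w f1 by apply/eqP; rewrite -addr_eq0 addrC -DD hw.
by rewrite e DN Dcomm hu D0 oppr0.
Qed.

Lemma mix23 u w : (u <= A2)%MS -> (w <= A3)%MS ->
  D u (D w f1) = 0 /\ D u (D w f2) = 0.
Proof.
move=> /m2 hu /m3 hw; split; last by rewrite Dcomm hu D0.
have e : D w f1 = - D w f2 by apply/eqP; rewrite -addr_eq0 -DD hw.
by rewrite e DN Dcomm hu D0 oppr0.
Qed.

Lemma A4E : (A4 <= A1 :&: A2)%MS.
Proof.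
apply/rV_subP => w /m4 d4.
have : (w <= A1 + A2 + A3)%MS by exact: submx_full fullH3.
case/sub_addsmxP => [[y z] /= ew].
have : (y *m (A1 + A2)%MS <= A1 + A2)%MS by exact: submxMl.
case/sub_addsmxP => [[x1 x2] /= ey].
move: ew; rewrite ey.
have w1 : (x1 *m A1 <= A1)%MS by exact: submxMl.
have w2 : (x2 *m A2 <= A2)%MS by exact: submxMl.
have w3 : (z *m A3 <= A3)%MS by exact: submxMl.
move: (x1 *m A1) (x2 *m A2) (z *m A3) w1 w2 w3 => v1 v2 v3 w1 w2 w3 ew.
have T u : D u (D v1 f1) - D u (D v1 f2) + (D u (D v2 f1) - D u (D v2 f2))
    + (D u (D v3 f1) - D u (D v3 f2)) = 0.
  by have := congr1 (D u) d4; rewrite D0 ew !DaddW !DB !DD !DN.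
have z1 : D v1 f2 = 0.
  apply: (kills_full char0 fullH3 _ (D_homog v1 h2)).
  apply: kills_adds; first apply: kills_adds.
  - move=> u hu; have := T u.
    rewrite (proj1 (m1 _) w1) D0 sub0r.
    have [-> ->] := mix12 hu w2; have [-> ->] := mix13 hu w3.
    by rewrite subrr !addr0 => /eqP; rewrite oppr_eq0 => /eqP.
  - by move=> u hu; rewrite Dcomm (proj1 (m2 _) hu) D0.
  - by move=> u hu; have [_ h] := mix13 w1 hu; rewrite Dcomm.
have z2 : D v2 f1 = 0.
  apply: (kills_full char0 fullH3 _ (D_homog v2 h1)).
  apply: kills_adds; first apply: kills_adds.
  - by move=> u hu; have [h _] := mix12 hu w2.
  - move=> u hu; have := T u.
    have [a1 a2] := mix12 w1 hu; rewrite Dcomm in a1; rewrite Dcomm in a2.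
    rewrite a1 a2 (proj1 (m2 _) w2) D0.
    by have [-> ->] := mix23 hu w3; rewrite !(subrr, subr0, add0r, addr0).
  - by move=> u hu; have [h _] := mix23 w2 hu; rewrite Dcomm.
have e3 : D v3 f2 = - D v3 f1.
  by apply/eqP; rewrite -addr_eq0 addrC -DD (proj1 (m3 _) w3).
have z3 : D v3 f1 = 0.
  apply: (kills_full char0 fullH3 _ (D_homog v3 h1)).
  apply: kills_adds; first apply: kills_adds.
  - by move=> u hu; have [h _] := mix13 hu w3.
  - by move=> u hu; have [h _] := mix23 hu w3.
  - move=> u hu; have := T u.
    have [a1 a2] := mix13 w1 hu; rewrite Dcomm in a1; rewrite Dcomm in a2.
    have [b1 b2] := mix23 w2 hu; rewrite Dcomm in b1; rewrite Dcomm in b2.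
    rewrite a1 a2 b1 b2 subrr !add0r e3 DN opprK => hX.
    have : (2%:R : K) *: D u (D v3 f1) = 0 by rewrite scaler_nat mulr2n.
    by move/eqP; rewrite scaler_eq0 (negbTE (nK_neq0 char0 1)) /= => /eqP.
have z3' : D v3 f2 = 0 by rewrite e3 z3 oppr0.
rewrite ew; apply: addmx_sub; first apply: addmx_sub; apply/mE.
- by split; [exact: (proj1 (m1 _) w1) | exact: z1].
- by split; [exact: z2 | exact: (proj1 (m2 _) w2)].
- by split.
Qed.

Lemma noncop_false : False.
Proof. have := mxrankS A4E; have := r4; move: hE hn; lia. Qed.

End NonCoplanar.

End Case2.


Lemma main_result : Disj1 \/ Disj2.
Proof.
case: (leqP (n - 2) (\rank (A1 :&: A2)%MS)) => [hr|hr]; first by left; exact: case1.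
have hE : (\rank (A1 :&: A2) <= n - 3)%N by move: hr hn; lia.
case: (boolP (A3 <= A1 + A2)%MS) => [cop|ncop].
  exact: coplanar_case hE cop.
by case: (noncop_false hE ncop).
Qed.

End Main.

Unset Implicit Arguments.
Set Strict Implicit.

Theorem lemma2p4 (K : closedFieldType) (n : nat) (f1 f2 : {mpoly K[n]}) :
  [pchar K] =i pred0 ->
  (3 <= n)%N ->
  f1 \is 3.-homog -> f2 \is 3.-homog ->
  lin_indep2 f1 f2 ->
  (forall f, in_span2 f1 f2 f ->
     exists x y : {mpoly K[n]}, [/\ x \is 1.-homog, y \is 1.-homog & in_sym3 x y f]) ->
  (exists x y : {mpoly K[n]},
     [/\ x \is 1.-homog, y \is 1.-homog, lin_indep2 x y &
         forall f, in_span2 f1 f2 f -> in_sym3 x y f])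
  \/
  (exists x y z : {mpoly K[n]},
     [/\ x \is 1.-homog, y \is 1.-homog, z \is 1.-homog, lin_indep3 x y z &
         forall f, in_span2 f1 f2 f <-> in_span2 (x ^+ 2 * y) (x ^+ 2 * z) f]).
Proof.
move=> char0 hn h1 h2 hind hyp.
exact: (main_result char0 hn h1 h2 hind hyp).
Qed.
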